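(* Let $n\ge 3$ and let $L\subseteq\Sigma^*$ be a finite or cofinite regular language with state complexity $n$ such that $\sigma(L)=(n-1)!$. Then $|\Sigma|\ge (n-1)!-(n-2)!$. Moreover, this bound is tight: for every $n\ge 3$ there exists a finite or cofinite language over an alphabet of size exactly $(n-1)!-(n-2)!$ with state complexity $n$ and syntactic complexity $(n-1)!$.
   Context: $\Sigma$ is a finite non-empty alphabet. A language is cofinite if its complement is finite. The state complexity of a regular language $L$ is the number of states of its minimal deterministic finite automaton (DFA). The syntactic congruence of $L$ is $x\approx_L y$ iff for all $u,v\in\Sigma^*$, $uxv\in L\Leftrightarrow uyv\in L$; the syntactic semigroup is $\Sigma^+/\approx_L$, and the syntactic complexity $\sigma(L)$ is its cardinality (equivalently, the number of distinct transformations of the states of the minimal DFA of $L$ induced by non-empty words). *)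

(* Defs.v *)
From mathcomp Require Import all_boot.
Set Implicit Arguments. Unset Strict Implicit. Unset Printing Implicit Defensive.

Definition language (A : finType) := seq A -> bool.

Record dfa (A : finType) := DFA {
  dfa_state : finType;
  dfa_init : dfa_state;
  dfa_trans : dfa_state -> A -> dfa_state;
  dfa_final : pred dfa_state }.

Definition dfa_accept (A : finType) (M : dfa A) (w : seq A) : bool :=
  @dfa_final A M (foldl (@dfa_trans A M) (@dfa_init A M) w).

Definition recognizes (A : finType) (M : dfa A) (L : language A) : Prop :=
  forall w, dfa_accept M w = L w.

Definition state_complexity (A : finType) (L : language A) (n : nat) : Prop :=
  (exists M : dfa A, recognizes M L /\ #|@dfa_state A M| = n) /\
  (forall M : dfa A, recognizes M L -> n <= #|@dfa_state A M|).

Definition synt_eq (A : finType) (L : language A) (x y : seq A) : Prop :=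
  forall u v : seq A, L (u ++ x ++ v) = L (u ++ y ++ v).

(* sigma(L) = k : the quotient of Sigma^+ by the syntactic congruence has
   exactly k elements, witnessed by a map from non-empty words onto 'I_k whose
   fibres are exactly the congruence classes. *)
Definition synt_complexity (A : finType) (L : language A) (k : nat) : Prop :=
  exists f : seq A -> 'I_k,
    (forall x y, 0 < size x -> 0 < size y -> (f x = f y <-> synt_eq L x y)) /\
    (forall i : 'I_k, exists x, 0 < size x /\ f x = i).

Definition finite_lang (A : finType) (L : language A) : Prop :=
  exists s : seq (seq A), forall w, L w -> w \in s.

Definition cofinite_lang (A : finType) (L : language A) : Prop :=
  exists s : seq (seq A), forall w, ~~ L w -> w \in s.

(* Main.v *)
Require Import Defs.
From mathcomp Require Import all_boot zify.
From Stdlib Require Import ClassicalEpsilon.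
Set Implicit Arguments. Unset Strict Implicit. Unset Printing Implicit Defensive.

Module P1.
Set Implicit Arguments. Unset Strict Implicit. Unset Printing Implicit Defensive.

Definition pb (P : Prop) : bool := if excluded_middle_informative P then true else false.
Lemma pbP (P : Prop) : reflect P (pb P).
Proof. rewrite /pb; case: excluded_middle_informative => H; by constructor. Qed.

Section Min.
Variables (A : finType) (M : dfa A).
Local Notation Q := (dfa_state M).
Local Notation tr := (@dfa_trans A M).
Local Notation fin := (@dfa_final A M).
Local Notation q0 := (@dfa_init A M).
Definition run (q : Q) (w : seq A) := foldl tr q w.
Definition reach (q : Q) := exists u, run q0 u = q.
Definition eqv (q r : Q) := forall w, fin (run q w) = fin (run r w).
Definition rep (q : Q) := odflt q [pick r | pb (reach r) && pb (eqv r q)].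

Lemma equiv_sym q r : eqv q r -> eqv r q. Proof. by move=> h w; rewrite h. Qed.
Lemma equiv_trans q r s : eqv q r -> eqv r s -> eqv q s.
Proof. by move=> h1 h2 w; rewrite h1 h2. Qed.
Lemma equiv_run q r w : eqv q r -> eqv (run q w) (run r w).
Proof. by move=> h w'; rewrite /run -!foldl_cat; apply: h. Qed.

Lemma repP q : reach q -> reach (rep q) /\ eqv (rep q) q.
Proof.
move=> hq; rewrite /rep; case: pickP => [r /andP[/pbP h1 /pbP h2] | H] //=.
Qed.

Lemma rep_eq q r : reach q -> eqv q r -> rep q = rep r.
Proof.
move=> hq he; rewrite /rep (@eq_pick _ _ (fun x => pb (reach x) && pb (eqv x r))).
  case: pickP => [x _ //| H]; move: (H q).
  by rewrite (introT (pbP _) hq) (introT (pbP _) he).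
move=> x /=; congr andb; apply/pbP/pbP => h.
  exact: equiv_trans h he.
exact: equiv_trans h (equiv_sym he).
Qed.

Lemma reach_tr q a : reach q -> reach (tr q a).
Proof. by case=> u hu; exists (rcons u a); rewrite /run -cats1 foldl_cat /= -/(run _ _) hu. Qed.

Definition DQP (q : Q) := pb (reach q) && (rep q == q).
Local Notation DQ := {q : Q | DQP q}.

Lemma DQP_rep q : reach q -> DQP (rep q).
Proof.
move=> hq; have [h1 h2] := repP hq.
rewrite /DQP (introT (pbP _) h1) /=; apply/eqP.
exact: rep_eq h1 h2.
Qed.

Lemma reach0 : reach q0. Proof. by exists [::]. Qed.

Definition Dinit : DQ := exist _ (rep q0) (DQP_rep reach0).
Lemma DQ_reach (d : DQ) : reach (val d).
Proof. by case: d => q /= /andP[/pbP]. Qed.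
Definition Dtr (d : DQ) (a : A) : DQ :=
  exist _ (rep (tr (val d) a)) (DQP_rep (reach_tr a (DQ_reach d))).
Definition Dfa : dfa A := @DFA A DQ Dinit Dtr (fun d => fin (val d)).

Lemma Drun (d : DQ) w : eqv (val (foldl Dtr d w)) (run (val d) w).
Proof.
elim: w d => [|a w IH] d /=; first by move=> w.
apply: equiv_trans (IH _) _ => /=.
have [_ h] := repP (reach_tr a (DQ_reach d)).
exact: (equiv_run w h).
Qed.

Lemma Drec : forall w, dfa_accept Dfa w = dfa_accept M w.
Proof.
move=> w; rewrite /dfa_accept /=.
have := Drun Dinit w => /(_ [::]) /= ->.
have [_ h] := repP reach0.
by have := equiv_run w h => /(_ [::]).
Qed.

Lemma min_props :
  #|Q| <= #|{: DQ}| -> (forall q, reach q) /\ (forall q r, eqv q r -> q = r).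
Proof.
move=> hc.
have hall : forall q, DQP q.
  have e : [set q | DQP q] = [set: Q].
    apply/eqP; rewrite eqEcard subsetT cardsT.
    rewrite cardsE; move: hc; rewrite card_sig.
 by [].
  by move=> q; have := in_setT q; rewrite -e inE.
split=> [q|q r he]; first by have /andP[/pbP] := hall q.
have /andP[/pbP hq /eqP eq] := hall q.
have /andP[_ /eqP er] := hall r.
by rewrite -eq -er; apply: rep_eq.
Qed.
End Min.

End P1.
Import P1.

Module P2.
Set Implicit Arguments. Unset Strict Implicit. Unset Printing Implicit Defensive.

Lemma in_sumn (T : eqType) (x : seq T) (s : seq (seq T)) :
  x \in s -> size x <= sumn (map size s).
Proof.
elim: s => //= y s IH; rewrite inE => /orP[/eqP->|/IH]; lia.
Qed.

Section Struct.
Variables (A : finType) (M : dfa A).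
Local Notation Q := (dfa_state M).
Local Notation tr := (@dfa_trans A M).
Local Notation fin := (@dfa_final A M).
Local Notation q0 := (@dfa_init A M).
Local Notation run := (run (M:=M)).
Hypothesis hreach : forall q : Q, reach q.
Hypothesis hequiv : forall q r : Q, eqv q r -> q = r.
Variables (c : bool) (s : seq (seq A)).
Hypothesis hfin : forall w, dfa_accept M w != c -> w \in s.

Definition Rs (q : Q) := [set r | pb (exists w, 0 < size w /\ run q w = r)].
Definition R2 (q : Q) := [set r | pb (exists w, 1 < size w /\ run q w = r)].
Definition sink q := q \in Rs q.
Definition aa q := #|Rs q|.

Lemma RsP q r : reflect (exists w, 0 < size w /\ run q w = r) (r \in Rs q).
Proof. rewrite inE; exact: pbP. Qed.
Lemma R2P q r : reflect (exists w, 1 < size w /\ run q w = r) (r \in R2 q).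
Proof. rewrite inE; exact: pbP. Qed.

Lemma run_cat q u v : run q (u ++ v) = run (run q u) v.
Proof. exact: foldl_cat. Qed.

Lemma Rs_trans q r x : r \in Rs q -> x \in Rs r -> x \in Rs q.
Proof.
move=> /RsP[u [hu <-]] /RsP[v [hv <-]]; apply/RsP; exists (u ++ v).
by rewrite size_cat run_cat; split=> //; lia.
Qed.

Lemma Rs_sub q r : r \in Rs q -> Rs r \subset Rs q.
Proof. by move=> h; apply/subsetP => x; apply: Rs_trans. Qed.

Lemma R2_sub q : R2 q \subset Rs q.
Proof.
apply/subsetP => x /R2P[w [hw <-]]; apply/RsP; exists w; split=> //; lia.
Qed.

Lemma acc_run w : dfa_accept M w = fin (run q0 w).
Proof. by []. Qed.

Lemma run_pow q v k : run q v = q -> run q (flatten (nseq k v)) = q.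
Proof. by move=> h; elim: k => //= k IH; rewrite run_cat h. Qed.

Lemma size_pow (v : seq A) k : 0 < size v -> k <= size (flatten (nseq k v)).
Proof. move=> h; elim: k => //= k IH; rewrite size_cat; lia. Qed.

Lemma sink_const q : sink q -> forall w, fin (run q w) = c.
Proof.
move=> /RsP[v [hv hq]] w; apply/eqP; apply: contraT => hne.
have [u hu] := hreach q.
set k := (sumn (map size s)).+1.
have hvk : run q (flatten (nseq k v)) = q by apply: run_pow.
have hsz := size_pow k hv.
move: hvk hsz; set vk := flatten (nseq k v) => hvk hsz.
have hx : u ++ vk ++ w \in s.
  apply: hfin; rewrite acc_run.
  by rewrite run_cat hu run_cat hvk.
have := in_sumn hx; rewrite size_cat (size_cat vk w).
move: hsz; rewrite /k; set z := size vk; set N := sumn _; lia.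
Qed.

Lemma sink_uniq q r : sink q -> r \in Rs q -> r = q.
Proof.
move=> hs /RsP[v [_ <-]]; apply: hequiv => w.
by rewrite -run_cat !sink_const.
Qed.

Lemma sink_Rs q : sink q -> Rs q = [set q].
Proof.
move=> hs; apply/setP => x; rewrite inE; apply/idP/eqP => [|->//].
exact: sink_uniq.
Qed.

Lemma aa_sink q : sink q -> aa q = 1.
Proof. by move=> h; rewrite /aa sink_Rs // cards1. Qed.

Lemma aa_lt q r : r \in Rs q -> ~~ sink r -> aa r < aa q.
Proof.
move=> hr hs; apply: proper_card; rewrite properE Rs_sub //=.
by apply/subsetPn; exists r.
Qed.

Lemma tr_Rs q b : tr q b \in Rs q.
Proof. by apply/RsP; exists [:: b]. Qed.

Lemma count_aa j : 2 <= j -> #|[set q | j <= aa q]| <= #|Q| - j.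
Proof.
move=> hj; set S := [set q | j <= aa q].
case: (set_0Vmem S) => [->|[q1 hq1]]; first by rewrite cards0.
case: (@arg_minnP _ q1 (fun q => j <= aa q) aa); first by move: hq1; rewrite inE.
move=> qm hqm hmin.
have hns : ~~ sink qm by apply/negP => /aa_sink; lia.
have hdis : S \subset ~: Rs qm.
  apply/subsetP => r; rewrite in_setC [r \in S]inE => hr; apply/negP => hrR.
  case hsr: (sink r).
    by move: hr; rewrite aa_sink //; lia.
  have := aa_lt hrR (negbT hsr); have := hmin r hr; lia.
have := subset_leq_card hdis; have := cardsC (Rs qm).
move: hqm; rewrite /aa; lia.
Qed.

Lemma sink_eq x y : sink x -> sink y -> x = y.
Proof. by move=> hx hy; apply: hequiv => w; rewrite !sink_const. Qed.

Lemma R2_lt q : 2 <= #|R2 q| -> #|R2 q| < aa q.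
Proof.
move=> h2.
have hR2 := subset_leq_card (R2_sub q).
case: (pickP (fun r => (r \in Rs q) && ~~ sink r)) => [r1 hr1 | hnone]; last first.
  have hle : #|Rs q| <= 1.
    case: (set_0Vmem (Rs q)) => [->|[x hx]]; first by rewrite cards0.
    have hxs : sink x by move: (hnone x); rewrite hx /= => /negbFE.
    apply: (@leq_trans #|[set x]|); last by rewrite cards1.
    apply: subset_leq_card; apply/subsetP => y hy; rewrite inE.
    have hys : sink y by move: (hnone y); rewrite hy /= => /negbFE.
    by rewrite (sink_eq hxs hys).
  lia.
case: (@arg_maxnP _ r1 (fun r => (r \in Rs q) && ~~ sink r) aa hr1).
move=> m /andP[hm hms] hmax.
have hnot : m \notin R2 q.
  apply/negP => /R2P[[|b [|b' w']] [//= _ hw]].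
  set q' := tr q b.
  have hmq' : m \in Rs q'.
    by apply/RsP; exists (b' :: w'); split=> //; rewrite -hw.
  case hs': (sink q').
    by move: hms; rewrite (sink_uniq hs' hmq') hs'.
  have := aa_lt hmq' hms.
  have := hmax q'; rewrite tr_Rs hs' /=; move=> h; have := h isT; lia.
have hsub : R2 q \subset Rs q :\ m.
  apply/subsetP => x hx; rewrite in_setD1 (subsetP (R2_sub q) x hx) andbT.
  by apply: contraNneq hnot => <-.
have := subset_leq_card hsub; have := cardsD1 m (Rs q); rewrite hm /aa; lia.
Qed.

Lemma count_R2 j : 2 <= j -> #|[set q | j <= #|R2 q|]| <= #|Q|.-1 - j.
Proof.
move=> hj.
have hsub : [set q | j <= #|R2 q|] \subset [set q | j.+1 <= aa q].
  apply/subsetP => q; rewrite !inE => h; have := R2_lt (leq_trans hj h); lia.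
have := count_aa (leq_trans hj (leqnSn j)).
have := subset_leq_card hsub; lia.
Qed.
End Struct.

End P2.
Import P2.

Module P3.
Set Implicit Arguments. Unset Strict Implicit. Unset Printing Implicit Defensive.

Lemma seq_max (s : seq nat) x0 : x0 \in s -> exists2 v, v \in s & forall x, x \in s -> x <= v.
Proof.
elim: s x0 => //= y s IH x0 _.
case: (boolP (has (fun x => x \in s) s)) => [/hasP[z hz _]|].
  have [v hv hmax] := IH _ hz.
  case: (leqP y v) => hyv.
    exists v; first by rewrite inE hv orbT.
    by move=> x; rewrite inE => /orP[/eqP->|/hmax].
  exists y; first by rewrite inE eqxx.
  by move=> x; rewrite inE => /orP[/eqP->//|/hmax]; lia.
move=> hn; exists y; first by rewrite inE eqxx.
move=> x; rewrite inE => /orP[/eqP->//|hx].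
by move: hn; rewrite (introT hasP) //; exists x.
Qed.

Lemma prod_le1 (s : seq nat) : all (fun x => x <= 1) s -> \prod_(x <- s) x <= 1.
Proof.
elim: s => [|y s IH]; first by rewrite big_nil.
rewrite big_cons /= => /andP[hy hs]; have := IH hs; nia.
Qed.

Lemma prod_bound m (s : seq nat) :
  (forall j, 2 <= j -> count (fun x => j <= x) s <= m.+1 - j) -> \prod_(x <- s) x <= m`!.
Proof.
elim: m s => [|m IH] s hc.
  apply: leq_trans (prod_le1 _) _ => //.
  apply/allP => x hx; case: (leqP x 1) => // h.
  have := hc 2 isT.
  have : has (fun x => 2 <= x) s by apply/hasP; exists x.
  rewrite has_count; lia.
case: (boolP (all (fun x => x <= 1) s)) => [/prod_le1 h|].
  apply: leq_trans h _; exact: fact_gt0.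
move=> /allPn[x0 hx0 hgt].
have [v hv hmax] := seq_max hx0.
have hv2 : 2 <= v by have := hmax x0 hx0; move: hgt; lia.
have hvm : v <= m.+1.
  have := hc v hv2.
  have : has (fun x => v <= x) s by apply/hasP; exists v.
  rewrite has_count; lia.
rewrite (perm_big _ (perm_to_rem hv)) big_cons factS.
apply: leq_mul => //; apply: IH => j hj.
rewrite count_rem hv /=.
case: (leqP j v) => hjv.
  have := hc j hj.
  have : has (fun x => j <= x) s by apply/hasP; exists v.
  rewrite has_count; lia.
have -> : count (fun x => j <= x) s = 0.
  apply/eqP; rewrite -leqn0 leqNgt -has_count; apply/hasP => [[x hx hjx]].
  have := hmax x hx; lia.
by [].
Qed.

End P3.
Import P3.

Module P4.
Set Implicit Arguments. Unset Strict Implicit. Unset Printing Implicit Defensive.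

Lemma foldr_prod (l : seq nat) : foldr muln 1 l = \prod_(x <- l) x.
Proof. by elim: l => [|x l IH]; rewrite ?big_nil ?big_cons //= IH. Qed.

Section Part1.
Variables (A : finType) (M : dfa A).
Local Notation Q := (dfa_state M).

Definition trw (w : seq A) : {ffun Q -> Q} := [ffun q => run q w].

Lemma trw_synt (L : language A) x y : recognizes M L -> trw x = trw y -> synt_eq L x y.
Proof.
move=> hrec he u v; rewrite -!hrec /dfa_accept !foldl_cat.
move/ffunP: he => /(_ (foldl (dfa_trans (d:=M)) (dfa_init M) u)).
by rewrite !ffunE /run => ->.
Qed.

Definition word_of (t : {ffun Q -> Q}) : seq A :=
  match excluded_middle_informative (exists w, 1 < size w /\ trw w = t) with
  | left H => proj1_sig (constructive_indefinite_description _ H)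
  | right _ => [::] end.

Lemma word_ofP t : (exists w, 1 < size w /\ trw w = t) -> 1 < size (word_of t) /\ trw (word_of t) = t.
Proof.
move=> h; rewrite /word_of; case: excluded_middle_informative => // H.
by case: constructive_indefinite_description.
Qed.

Lemma card_T2 : #|[set t : {ffun Q -> Q} | [forall q : Q, t q \in R2 q]]| = \prod_(x <- [seq #|R2 q| | q : Q]) x.
Proof.
rewrite -foldr_prod.
have -> : #|[set t : {ffun Q -> Q} | [forall q : Q, t q \in R2 q]]| = #|family (fun q : Q => mem (R2 q))|.
  apply: eq_card => t; rewrite inE; apply/forallP/familyP => h q; exact: h.
rewrite card_family.
by [].
Qed.
End Part1.

Lemma part1 (A : finType) (L : language A) (n : nat) :
      0 < #|A| -> 3 <= n ->
      (finite_lang L \/ cofinite_lang L) ->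
      state_complexity L n ->
      synt_complexity L (n.-1)`! ->
      (n.-1)`! - (n.-2)`! <= #|A|.
Proof.
move=> _ hn hfc [[M [hrec hcard]] hmin] [f [hf hsurj]].
have hD := hmin (Dfa M) (fun w => etrans (Drec M w) (hrec w)).
have hmp := @min_props A M; rewrite hcard in hmp; have [hreach hequiv] := hmp hD.
have [c [s hfin]] : exists (c : bool) (s : seq (seq A)), forall w, dfa_accept M w != c -> w \in s.
  case: hfc => [[s hs]|[s hs]]; [exists false | exists true]; exists s => w; rewrite hrec.
    by move=> h; apply: hs; case: (L w) h.
  by move=> h; apply: hs; case: (L w) h.
have hcnt := count_R2 hreach hequiv hfin.
set T2 := [set t : {ffun dfa_state M -> dfa_state M} | [forall q : dfa_state M, t q \in R2 q]].
have hT2 : #|T2| <= (n.-2)`!.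
  rewrite card_T2; apply: prod_bound => j hj; rewrite count_map.
  have := hcnt j hj; rewrite cardsE cardE /enum_mem size_filter.
  rewrite (@eq_filter _ _ predT) // filter_predT.
  rewrite (@eq_count _ (mem (fun x : dfa_state M => eqn (j - #|R2 x|) 0)) (preim (fun q : dfa_state M => #|R2 q|) [eta leq j])) //.
  rewrite hcard; lia.
have hsub : [set: 'I_(n.-1)`!] \subset
    [set f [:: a] | a in [set: A]] :|: [set f (word_of t) | t in T2].
  apply/subsetP => i _; have [w [hw hfw]] := hsurj i.
  case: w hw hfw => [|a [|b w]] //= _ hfw.
    by rewrite inE; apply/orP; left; apply/imsetP; exists a.
  rewrite inE; apply/orP; right; apply/imsetP.
  set t := trw M [:: a, b & w].
  have htT : t \in T2.
    rewrite inE; apply/forallP => q; apply/R2P; exists [:: a, b & w].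
    by rewrite ffunE.
  exists t => //.
  have [hw' ht'] := word_ofP (ex_intro _ [:: a, b & w] (conj (isT : 1 < size [:: a, b & w]) erefl) : exists w0, 1 < size w0 /\ trw M w0 = t).
  rewrite -hfw; apply/esym/hf => //; first lia.
  by apply: trw_synt.
have := subset_leq_card hsub; rewrite cardsT card_ord.
have := (leq_card_setU [set f [:: a] | a in [set: A]] [set f (word_of t) | t in T2]).1.
have := leq_imset_card (fun a => f [:: a]) [set: A]; rewrite cardsT.
have := leq_imset_card (fun t => f (word_of t)) T2.
move: hT2 => h1 h2 h3 h4 h5; rewrite leq_subLR addnC; apply: (leq_trans h5); apply: (leq_trans h4); apply: leq_add => //; exact: leq_trans h2 h1.
Qed.

End P4.
Import P4.

Module P5.
Set Implicit Arguments. Unset Strict Implicit. Unset Printing Implicit Defensive.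

Lemma prod_fact k : \prod_(i < k) (k - i) = k`!.
Proof.
elim: k => [|k IH]; first by rewrite big_ord0.
by rewrite big_ord_recl subn0 factS; congr (_ * _); rewrite -IH; apply: eq_bigr => i _; rewrite lift0.
Qed.

Lemma count_geq a n k : count (fun x => k <= x) (iota a n) = (a + n) - maxn a k.
Proof. elim: n a => [|n IH] a /=; first lia. rewrite IH; case: leqP; lia. Qed.

Lemma card_ord_geq n k : #|[set j : 'I_n | k <= j]| = n - k.
Proof.
rewrite cardsE cardE /enum_mem size_filter.
have -> : count (mem [pred j : 'I_n | k <= j]) (Finite.enum 'I_n) = count (fun x => k <= x) (iota 0 n).
  rewrite -val_enum_ord count_map /enum_mem (@eq_filter _ _ predT) // filter_predT.
  by apply: eq_count.
rewrite count_geq; lia.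
Qed.

Section Part2.
Variable m : nat.
Local Notation N := m.+3.
Definition incT (i : nat) := if i == m.+2 then m.+2 else i.+1.
Definition redT (i : nat) := if m.+1 <= i then m.+2 else i.+2.
Local Notation fT := {ffun 'I_N -> 'I_N}.
Definition Inc : {set fT} := [set t : fT | [forall i : 'I_N, incT i <= t i]].
Definition Red : {set fT} := [set t : fT | [forall i : 'I_N, redT i <= t i]].
Definition Irr := Inc :\: Red.

Lemma incT_ge x : x <= incT x. Proof. rewrite /incT; case: eqP; lia. Qed.
Lemma incT_le (i : 'I_N) : incT i <= m.+2. Proof. have := ltn_ord i; rewrite /incT; case: eqP; lia. Qed.
Lemma redT_le (i : 'I_N) : redT i <= m.+2 -> True. Proof. by []. Qed.

Lemma IncP (t : fT) : reflect (forall i : 'I_N, incT i <= t i) (t \in Inc).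
Proof. rewrite inE; exact: forallP. Qed.
Lemma RedP (t : fT) : reflect (forall i : 'I_N, redT i <= t i) (t \in Red).
Proof. rewrite inE; exact: forallP. Qed.

Lemma Red_sub : Red \subset Inc.
Proof.
apply/subsetP => t /RedP h; apply/IncP => i; have := h i.
have := ltn_ord i; rewrite /incT /redT; case: (nat_of_ord i == m.+2) /eqP; case: (ltnP m i); lia.
Qed.

Lemma card_Inc : #|Inc| = (m.+2)`!.
Proof.
have -> : #|Inc| = #|family (fun i : 'I_N => mem [set j : 'I_N | incT i <= j])|.
  apply: eq_card => t; rewrite inE; apply/forallP/familyP => h i; move: (h i); by rewrite inE.
rewrite card_family foldr_prod big_map big_enum /=.
under eq_bigr => i _ do rewrite card_ord_geq.
rewrite big_ord_recr /= /incT eqxx subSnn muln1 -prod_fact.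
apply: eq_bigr => i _ /=; have := ltn_ord i; case: eqP; lia.
Qed.

Lemma card_Red : #|Red| = (m.+1)`!.
Proof.
have -> : #|Red| = #|family (fun i : 'I_N => mem [set j : 'I_N | redT i <= j])|.
  apply: eq_card => t; rewrite inE; apply/forallP/familyP => h i; move: (h i); by rewrite inE.
rewrite card_family foldr_prod big_map big_enum /=.
under eq_bigr => i _ do rewrite card_ord_geq.
rewrite big_ord_recr big_ord_recr /= /redT leqnn ltnW // subSnn !muln1 -prod_fact.
apply: eq_bigr => i _ /=; have := ltn_ord i; case: leqP; lia.
Qed.

Lemma card_Irr : #|Irr| = (m.+2)`! - (m.+1)`!.
Proof.
by rewrite /Irr cardsD (setIidPr Red_sub) card_Inc card_Red.
Qed.

Local Notation Al := {t : fT | t \in Irr}.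
Definition DM : dfa Al := @DFA Al 'I_N ord0 (fun q a => val a q) (fun q => nat_of_ord q == m.+1).

Lemma Irr_Inc t : t \in Irr -> t \in Inc.
Proof. by rewrite in_setD => /andP[]. Qed.

Lemma Inc_comp (t1 t2 : fT) : t1 \in Inc -> t2 \in Inc -> [ffun q => t2 (t1 q)] \in Inc.
Proof.
move=> /IncP h1 /IncP h2; apply/IncP => i; rewrite ffunE.
have := h2 (t1 i); have := h1 i; have := incT_ge (t1 i); have := ltn_ord (t1 i).
rewrite /incT; case: (nat_of_ord i == m.+2) /eqP; case: (nat_of_ord (t1 i) == m.+2) /eqP; lia.
Qed.

Lemma trw_cons (a : Al) w : trw DM (a :: w) = [ffun q => trw DM w (val a q)].
Proof. by apply/ffunP => q; rewrite !ffunE. Qed.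

Lemma trw_Inc w : 0 < size w -> trw DM w \in Inc.
Proof.
elim: w => // a [|b w] IH _.
  have -> : trw DM [:: a] = val a by apply/ffunP => q; rewrite ffunE.
  by apply: Irr_Inc; case: a.
rewrite trw_cons.
have -> : [ffun q => trw DM (b :: w) (val a q)] = [ffun q => trw DM (b :: w) (val a q)] by [].
apply: Inc_comp (IH isT); by apply: Irr_Inc; case: a.
Qed.

Definition shift : fT := [ffun i : 'I_N => inord (incT i)].
Lemma shiftE (i : 'I_N) : nat_of_ord (shift i) = incT i.
Proof. by rewrite ffunE inordK // ltnS incT_le. Qed.

Lemma Irr0 (t : fT) : t \in Inc -> nat_of_ord (t ord0) = 1 -> t \in Irr.
Proof.
move=> hI h0; rewrite in_setD hI andbT; apply/RedP => /(_ ord0).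
by rewrite h0 /redT.
Qed.

Lemma shift_Irr : shift \in Irr.
Proof.
apply: Irr0; last by rewrite shiftE.
by apply/IncP => i; rewrite shiftE.
Qed.

Lemma realize (t : fT) : t \in Inc -> exists w, 0 < size w /\ trw DM w = t.
Proof.
move=> hI.
case hIrr: (t \in Irr).
  exists [:: (exist _ t hIrr : Al)]; split => //.
  by apply/ffunP => q; rewrite ffunE.
have hR : t \in Red by move: hIrr; rewrite in_setD hI andbT => /negbFE.
move/IncP: (hI) => hI'; move/RedP: hR => hR'.
pose t1 : fT := [ffun j : 'I_N => if nat_of_ord j == 0 then inord 1 else t (inord j.-1)].
have ht1 : t1 \in Irr.
  apply: Irr0; last by rewrite ffunE /= inordK.
  apply/IncP => j; rewrite ffunE.
  case: eqP => hj0.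
    by rewrite inordK // /incT hj0.
  have := hR' (inord j.-1); rewrite /redT /incT inordK; last first.
    have := ltn_ord j; lia.
  have := ltn_ord j; case: (nat_of_ord j == m.+2) /eqP; case: (ltnP m j.-1); lia.
exists [:: (exist _ shift shift_Irr : Al); (exist _ t1 ht1 : Al)]; split => //.
apply/ffunP => q; rewrite ffunE /= /P1.run /= ffunE.
apply: val_inj; rewrite /=.
have hs := shiftE q; move: hs.
rewrite /incT; case: (nat_of_ord q == m.+2) /eqP => hq hs.
  have ht : nat_of_ord (t q) = m.+2.
    have := hI' q; have := ltn_ord (t q); rewrite /incT hq eqxx; lia.
  rewrite ht; case: eqP => [|_]; first lia.
  have := hR' (inord (shift q).-1); have := ltn_ord (t (inord (shift q).-1)).
  rewrite /redT inordK hs /= ?ltnSn //; lia.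
case: eqP => [|_]; first lia.
congr (nat_of_ord (t _)); apply: val_inj; rewrite /= inordK hs //.
have := ltn_ord q; lia.
Qed.

Local Notation fin := (fun q : 'I_N => nat_of_ord q == m.+1).
Local Notation runD := (P1.run (M:=DM)).

Lemma trwE w (q : 'I_N) : trw DM w q = runD q w.
Proof. by rewrite ffunE. Qed.

Lemma reach_all (q : 'I_N) : exists u, runD ord0 u = q.
Proof.
case: (eqVneq (nat_of_ord q) 0) => hq0.
  by exists [::]; apply: val_inj; rewrite /= hq0.
pose t : fT := [ffun i => if i == ord0 then q else ord_max].
have hI : t \in Inc.
  apply/IncP => i; rewrite ffunE; case: eqP => [->|_]; first by rewrite /incT /=; lia.
  by rewrite /= incT_le.
have [w [_ hw]] := realize hI.
by exists w; rewrite -trwE hw ffunE eqxx.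
Qed.

Lemma dist (p q : 'I_N) : p != q -> exists v, fin (runD p v) != fin (runD q v).
Proof.
wlog hpq : p q / p < q.
  move=> H hne; case: (ltngtP p q) => h; first exact: H.
    have hqp : q != p by rewrite eq_sym.
    have [v hv] := H q p h hqp.
    by exists v; rewrite eq_sym.
  by move: hne; rewrite (val_inj h) eqxx.
move=> _.
case: (eqVneq (nat_of_ord p) m.+1) => hp.
  exists [::] => /=; rewrite hp eqxx; have := ltn_ord q; move: hpq; rewrite hp.
  by case: eqP => //; lia.
pose t : fT := [ffun i => if i == p then inord m.+1 else ord_max].
have hI : t \in Inc.
  apply/IncP => i; rewrite ffunE; case: eqP => [->|_].
    rewrite inordK // /incT; have := ltn_ord q; move: hp hpq.
    move=> /eqP hp1 hpq1 hq1; case: (nat_of_ord p == m.+2) /eqP; lia.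
  exact: incT_le.
have [w [_ hw]] := realize hI.
exists w; rewrite -!trwE hw !ffunE eqxx inordK // eqxx.
have -> : (q == p) = false by apply/negbTE; rewrite neq_ltn hpq orbT.
by rewrite /= eqn_leq ltnn.
Qed.

Lemma run_ge w (q : 'I_N) : minn (q + size w) m.+2 <= runD q w.
Proof.
elim: w q => [|a w IH] q /=.
  have := ltn_ord q; lia.
have := IH (sval a q) => /=.
have : incT q <= sval a q by move/IncP: (Irr_Inc (valP a)); apply.
have := incT_ge q; have := ltn_ord q.
rewrite /incT; case: (nat_of_ord q == m.+2) /eqP; move: (runD (sval a q) w) (sval a q) => r x; lia.
Qed.

Definition LD : language Al := fun w => dfa_accept DM w.

Lemma LD_size w : LD w -> size w <= m.+1.
Proof.
rewrite /LD /dfa_accept /= => /eqP h.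
have := run_ge w ord0; rewrite /P1.run h /=; lia.
Qed.

Lemma synt_trw x y : synt_eq LD x y -> trw DM x = trw DM y.
Proof.
move=> hs; apply/ffunP => q; apply/eqP; apply/negPn/negP => hne.
have [u hu] := reach_all q.
have [v hv] := dist hne.
move: (hs u v); rewrite /LD /dfa_accept !foldl_cat.
change (foldl (dfa_trans (d:=DM)) (dfa_init DM) u) with (runD ord0 u).
rewrite hu => he.
by move: hv; rewrite !trwE; apply/negP/negPn/eqP.
Qed.
End Part2.

Fixpoint allw (T : Type) (l : seq T) (k : nat) : seq (seq T) :=
  match k with
  | 0 => [:: [::]]
  | k'.+1 => [::] :: flatten [seq [seq a :: w | w <- allw l k'] | a <- l]
  end.

Lemma allwP (T : eqType) (l : seq T) k w : all (fun a => a \in l) w -> size w <= k -> w \in allw l k.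
Proof.
elim: k w => [|k IH] [|a w] //= /andP[hal hw] hsz.
rewrite inE /=; apply/flattenP.
exists [seq a :: w | w <- allw l k]; first by apply/mapP; exists a.
by apply/mapP; exists w => //; apply: IH.
Qed.

End P5.
Import P5.


Lemma part2m (m : nat) :
  exists (A : finType) (L : language A),
    #|A| = (m.+3.-1)`! - (m.+3.-2)`! /\
    (finite_lang L \/ cofinite_lang L) /\
    state_complexity L m.+3 /\
    synt_complexity L (m.+3.-1)`!.
Proof.
exists {t : {ffun 'I_m.+3 -> 'I_m.+3} | t \in Irr m}, (@LD m).
split.
  by rewrite card_sig -card_Irr; apply: eq_card.
split.
  left; exists (allw (enum {: {t : {ffun 'I_m.+3 -> 'I_m.+3} | t \in Irr m}}) m.+1) => w hw.
  apply: allwP; last exact: LD_size.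
  by apply/allP => a _; rewrite mem_enum.
split.
  split; first by exists (@DM m); split => //; rewrite card_ord.
  move=> M' hrec.
  pose uq (q : 'I_m.+3) := proj1_sig (constructive_indefinite_description _ (reach_all q)).
  have huq : forall q : 'I_m.+3, P1.run (M:=@DM m) ord0 (uq q) = q.
    by move=> q; rewrite /uq; case: constructive_indefinite_description.
  pose g (q : 'I_m.+3) := P1.run (dfa_init M') (uq q).
  have hg : injective g.
    move=> p q hpq; apply/eqP; apply/negPn/negP => hne.
    have [v hv] := dist hne.
    have := hrec (uq p ++ v); have := hrec (uq q ++ v).
    rewrite /dfa_accept !foldl_cat -!/(P1.run _ _) -/(g p) -/(g q) hpq => -> .
    rewrite /LD /dfa_accept !foldl_cat.
    change (foldl (dfa_trans (d:=DM m)) (dfa_init (@DM m)) (uq p)) with (P1.run (M:=@DM m) ord0 (uq p)).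
    change (foldl (dfa_trans (d:=DM m)) (dfa_init (@DM m)) (uq q)) with (P1.run (M:=@DM m) ord0 (uq q)).
    rewrite huq huq => he.
    by move: hv; apply/negP/negPn/eqP.
  by have := @leq_card _ _ g hg; rewrite card_ord.
have hs0 : shift m \in Inc m by apply: Irr_Inc; apply: shift_Irr.
pose f (w : seq {t : {ffun 'I_m.+3 -> 'I_m.+3} | t \in Irr m}) : 'I_(m.+2)`! :=
  cast_ord (card_Inc m) (enum_rank_in hs0 (trw (@DM m) w)).
exists f; split.
  move=> x y hx hy; split.
    move=> /cast_ord_inj he.
    have := congr1 enum_val he; rewrite !enum_rankK_in ?trw_Inc // => ht.
    exact: (@trw_synt _ (@DM m) (@LD m) x y (fun _ => erefl) ht).
  by move=> hs; rewrite /f (synt_trw hs).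
move=> i; pose j := cast_ord (esym (card_Inc m)) i.
have hI := enum_valP j.
have [w [hw hwt]] := realize hI.
exists w; split => //.
by rewrite /f hwt enum_valK_in; apply: val_inj.
Qed.

Theorem theorem2 :
  (forall (A : finType) (L : language A) (n : nat),
      0 < #|A| -> 3 <= n ->
      (finite_lang L \/ cofinite_lang L) ->
      state_complexity L n ->
      synt_complexity L (n.-1)`! ->
      (n.-1)`! - (n.-2)`! <= #|A|) /\
  (forall n : nat, 3 <= n ->
      exists (A : finType) (L : language A),
        #|A| = (n.-1)`! - (n.-2)`! /\
        (finite_lang L \/ cofinite_lang L) /\
        state_complexity L n /\
        synt_complexity L (n.-1)`!).
Proof.
split; first exact: part1.
by case=> [|[|[|m]]] // _; apply: part2m.
Qed.
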